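(* Let $X$ be a Baire space, $Y$ a topological space, $(Z,d)$ a metric space and $f:X\times Y\to Z$ a mapping. Suppose $f^y$ is quasicontinuous for every $y\in Y$, and there is a dense set $D\subset Y$ such that for every $y\in D$: (i) there is a dense Baire subspace $Q_y$ of $X$ such that $f_x$ is cliquish at $y$ for every $x\in Q_y$, and (ii) some neighborhood of $y$ in $Y$ has a countable pseudobase. Then $f$ is cliquish (at every point of $X\times Y$).
   Context: $f_x(y)=f^y(x)=f(x,y)$. A mapping $g$ is quasicontinuous at $a$ if for each neighborhood $U$ of $a$ and neighborhood $W$ of $g(a)$ there is an open $O$ with $\emptyset\ne O\subset U$ and $g(O)\subset W$; quasicontinuous means at every point. A mapping $g$ from a space $T$ into $(Z,d)$ is cliquish at $t$ if for each $\varepsilon>0$ and each neighborhood $U$ of $t$ there is an open $O$ with $\emptyset\ne O\subset U$ and $\mathrm{diam}(g(O))\le\varepsilon$; cliquish means at every point (for $f$, with $T=X\times Y$ with the product topology). A pseudobase of a space is a collection of nonempty open sets such that every nonempty open set contains one of them. *)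

(* Defs.v *)
From Stdlib Require Import Reals Lra Classical.
Open Scope R_scope.

Record topology (X : Type) := Topology {
  open : (X -> Prop) -> Prop;
  open_full : open (fun _ => True);
  open_inter : forall A B, open A -> open B -> open (fun x => A x /\ B x);
  open_union : forall F : (X -> Prop) -> Prop,
      (forall A, F A -> open A) -> open (fun x => exists A, F A /\ A x)
}.
Arguments open {X} t A.

Definition nbhd {X} (t : topology X) (a : X) (N : X -> Prop) : Prop :=
  exists O, open t O /\ O a /\ forall x, O x -> N x.

Definition dense {X} (t : topology X) (D : X -> Prop) : Prop :=
  forall O, open t O -> (exists x, O x) -> exists x, O x /\ D x.

Definition baire {X} (t : topology X) : Prop :=
  forall G : nat -> X -> Prop,
    (forall n, open t (G n) /\ dense t (G n)) ->
    dense t (fun x => forall n, G n x).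

Definition sub_open {X} (t : topology X) (Q : X -> Prop)
  (A : {x | Q x} -> Prop) : Prop :=
  exists O, open t O /\ forall q : {x | Q x}, A q <-> O (proj1_sig q).

Lemma sub_open_full {X} (t : topology X) Q : sub_open t Q (fun _ => True).
Proof. exists (fun _ => True); split; [apply open_full | tauto]. Qed.

Lemma sub_open_inter {X} (t : topology X) Q A B :
  sub_open t Q A -> sub_open t Q B -> sub_open t Q (fun x => A x /\ B x).
Proof.
  intros [O1 [H1 E1]] [O2 [H2 E2]].
  exists (fun x => O1 x /\ O2 x); split; [apply open_inter; auto|].
  intros q; rewrite E1, E2; tauto.
Qed.

Lemma sub_open_union {X} (t : topology X) Q (F : ({x | Q x} -> Prop) -> Prop) :
  (forall A, F A -> sub_open t Q A) -> sub_open t Q (fun x => exists A, F A /\ A x).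
Proof.
  intros HF.
  exists (fun x => exists O, (open t O /\ forall q : {x | Q x},
             O (proj1_sig q) -> exists A, F A /\ A q) /\ O x).
  split.
  - apply open_union; intros O [HO _]; exact HO.
  - intros q; split.
    + intros [A [FA Aq]]. destruct (HF A FA) as [O [HO E]].
      exists O; split; [split; [exact HO|]|].
      * intros q' Oq'; exists A; split; [exact FA| apply E; exact Oq'].
      * apply E; exact Aq.
    + intros [O [[_ HO] Oq]]. apply HO; exact Oq.
Qed.

Definition subspace {X} (t : topology X) (Q : X -> Prop) : topology {x | Q x} :=
  @Topology _ (sub_open t Q) (sub_open_full t Q) (sub_open_inter t Q)
           (sub_open_union t Q).

Definition prod_open {X Y} (tX : topology X) (tY : topology Y)
  (W : X * Y -> Prop) : Prop :=
  forall p, W p -> exists A B, open tX A /\ open tY B /\ A (fst p) /\ B (snd p) /\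
     forall x y, A x -> B y -> W (x, y).

Lemma prod_open_full {X Y} tX tY : @prod_open X Y tX tY (fun _ => True).
Proof.
  intros p _; exists (fun _ => True), (fun _ => True);
  repeat split; auto using open_full.
Qed.

Lemma prod_open_inter {X Y} tX tY A B :
  @prod_open X Y tX tY A -> prod_open tX tY B ->
  prod_open tX tY (fun x => A x /\ B x).
Proof.
  intros HA HB p [Ap Bp].
  destruct (HA p Ap) as [A1 [B1 [oa1 [ob1 [a1 [b1 K1]]]]]].
  destruct (HB p Bp) as [A2 [B2 [oa2 [ob2 [a2 [b2 K2]]]]]].
  exists (fun x => A1 x /\ A2 x), (fun y => B1 y /\ B2 y).
  repeat split; try apply open_inter; auto; firstorder.
Qed.

Lemma prod_open_union {X Y} tX tY (F : (X * Y -> Prop) -> Prop) :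
  (forall A, F A -> prod_open tX tY A) ->
  prod_open tX tY (fun x => exists A, F A /\ A x).
Proof.
  intros HF p [A [FA Ap]].
  destruct (HF A FA p Ap) as [A1 [B1 [? [? [? [? H1]]]]]].
  exists A1, B1; repeat split; auto.
  intros x y Ax By; exists A; split; auto.
Qed.

Definition product {X Y} (tX : topology X) (tY : topology Y) : topology (X * Y) :=
  @Topology _ (prod_open tX tY) (prod_open_full tX tY) (prod_open_inter tX tY)
           (prod_open_union tX tY).

Record metric (Z : Type) := Metric {
  dist : Z -> Z -> R;
  dist_eq0 : forall x y, dist x y = 0 <-> x = y;
  dist_sym : forall x y, dist x y = dist y x;
  dist_tri : forall x y z, dist x z <= dist x y + dist y z
}.
Arguments dist {Z} m x y.

Definition metric_open {Z} (m : metric Z) (W : Z -> Prop) : Prop :=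
  forall z, W z -> exists eps, 0 < eps /\ forall w, dist m z w < eps -> W w.

Lemma metric_open_full {Z} (m : metric Z) : metric_open m (fun _ => True).
Proof. intros z _; exists 1; split; [lra| auto]. Qed.

Lemma metric_open_inter {Z} (m : metric Z) A B :
  metric_open m A -> metric_open m B -> metric_open m (fun x => A x /\ B x).
Proof.
  intros HA HB z [Az Bz].
  destruct (HA z Az) as [e1 [He1 H1]]; destruct (HB z Bz) as [e2 [He2 H2]].
  exists (Rmin e1 e2); split; [apply Rmin_glb_lt; auto|].
  intros w Hw; split; [apply H1| apply H2];
  eapply Rlt_le_trans; eauto; [apply Rmin_l| apply Rmin_r].
Qed.

Lemma metric_open_union {Z} (m : metric Z) (F : (Z -> Prop) -> Prop) :
  (forall A, F A -> metric_open m A) ->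
  metric_open m (fun x => exists A, F A /\ A x).
Proof.
  intros HF z [A [FA Az]]. destruct (HF A FA z Az) as [e [He H]].
  exists e; split; auto. intros w Hw; exists A; auto.
Qed.

Definition metric_top {Z} (m : metric Z) : topology Z :=
  @Topology _ (metric_open m) (metric_open_full m) (metric_open_inter m)
           (metric_open_union m).

Definition quasicontinuous_at {T Z} (tT : topology T) (tZ : topology Z)
  (g : T -> Z) (a : T) : Prop :=
  forall U W, nbhd tT a U -> nbhd tZ (g a) W ->
    exists O, open tT O /\ (exists x, O x) /\ (forall x, O x -> U x) /\
              (forall x, O x -> W (g x)).

Definition quasicontinuous {T Z} (tT : topology T) (tZ : topology Z)
  (g : T -> Z) : Prop := forall a, quasicontinuous_at tT tZ g a.

(** Cliquishness of g : T -> (Z,d) at t.  "diam (g(O)) <= eps" is written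
    as: all pairwise distances of points of g(O) are <= eps. *)
Definition cliquish_at {T Z} (tT : topology T) (m : metric Z)
  (g : T -> Z) (t : T) : Prop :=
  forall eps U, 0 < eps -> nbhd tT t U ->
    exists O, open tT O /\ (exists x, O x) /\ (forall x, O x -> U x) /\
      (forall x x', O x -> O x' -> dist m (g x) (g x') <= eps).

Definition cliquish {T Z} (tT : topology T) (m : metric Z) (g : T -> Z) : Prop :=
  forall t, cliquish_at tT m g t.

Definition has_countable_pseudobase {X} (t : topology X) : Prop :=
  exists B : nat -> X -> Prop,
    (forall n, open t (B n) /\ exists x, B n x) /\
    (forall O, open t O -> (exists x, O x) ->
       exists n, forall x, B n x -> O x).

(* Main.v *)
Require Import Defs.
From Stdlib Require Import Reals Lra Classical.
Open Scope R_scope.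

Lemma ball_nbhd {Z} (m : metric Z) z r : 0 < r ->
  nbhd (metric_top m) z (fun w => Defs.dist m z w < r).
Proof.
  intros Hr. exists (fun w => Defs.dist m z w < r). split; [|split].
  - change (metric_open m (fun w => Defs.dist m z w < r)).
    intros w Hw. exists (r - Defs.dist m z w). split; [lra|].
    intros u Hu. pose proof (Defs.dist_tri _ m z w u). lra.
  - assert (Defs.dist m z z = 0) by (apply Defs.dist_eq0; reflexivity). lra.
  - auto.
Qed.

Lemma qc_ball {T Z} (tT : topology T) (m : metric Z) (g : T -> Z) x :
  quasicontinuous_at tT (metric_top m) g x ->
  forall U r, open tT U -> U x -> 0 < r ->
  exists P, open tT P /\ (exists p, P p) /\ (forall p, P p -> U p) /\
    forall p, P p -> Defs.dist m (g x) (g p) < r.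
Proof.
  intros Hq U r HU Ux Hr.
  destruct (Hq U (fun w => Defs.dist m (g x) w < r)) as [P [HP [HPn [HPU HPd]]]].
  - exists U; auto.
  - apply ball_nbhd; auto.
  - exists P; auto.
Qed.

Theorem theorem4p2 (X Y Z : Type) (tX : topology X) (tY : topology Y)
  (m : metric Z) (f : X * Y -> Z) :
  baire tX ->
  (forall y : Y, quasicontinuous tX (metric_top m) (fun x => f (x, y))) ->
  (exists D : Y -> Prop, dense tY D /\
     forall y, D y ->
       (exists Q : X -> Prop, dense tX Q /\ baire (subspace tX Q) /\
          forall x, Q x -> cliquish_at tY m (fun y' => f (x, y')) y) /\
       (exists N : Y -> Prop, nbhd tY y N /\
          has_countable_pseudobase (subspace tY N))) ->
  cliquish (product tX tY) m f.
Proof.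
  intros HbX Hqc [D [HD HDy]] [a b] eps U Heps HU.
  destruct HU as [OU [HOU [OUab HOUU]]].
  destruct (HOU (a,b) OUab) as [A [B [HA [HB [Aa [Bb HAB]]]]]].
  simpl in Aa, Bb.
  destruct (HD B HB (ex_intro _ b Bb)) as [y0 [By0 Dy0]].
  destruct (HDy y0 Dy0) as [[Q [HQd [HQb HQc]]] [N [[ON [HON [ONy0 HONN]]] [Bs [HBs HBcov]]]]].
  pose (e1 := eps/4).
  pose (V := fun y => B y /\ ON y).
  assert (HV : open tY V) by (apply open_inter; auto).
  pose (Bn k y := exists h : N y, Bs k (exist _ y h)).
  pose (E k x := Q x /\ A x /\ (forall y, Bn k y -> V y) /\
     (forall y y', Bn k y -> Bn k y' -> Defs.dist m (f (x,y)) (f (x,y')) <= e1)).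
  assert (Hcov : forall x, Q x -> A x -> exists k, E k x).
  { intros x Qx Ax.
    destruct (HQc x Qx e1 V) as [W [HW [[w Ww] [WV Wd]]]].
    - unfold e1; lra.
    - exists V; split; auto; split; [split; auto|auto].
    - destruct (HBcov (fun q => W (proj1_sig q))) as [k Hk].
      + change (sub_open tY N (fun q => W (proj1_sig q))).
        exists W; split; auto. intros q; tauto.
      + assert (Nw : N w) by (apply HONN; apply (WV w Ww)).
        exists (exist _ w Nw). simpl; auto.
      + exists k. unfold E. split; [exact Qx|]. split; [exact Ax|]. split.
        * intros yy Hyy. destruct Hyy as [h Hy]. apply WV. apply (Hk _ Hy).
        * intros yy yy' Hyy Hyy'. destruct Hyy as [h Hy]. destruct Hyy' as [h' Hy'].
          apply Wd; [apply (Hk _ Hy)| apply (Hk _ Hy')]. }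
  assert (Hex : exists k OH, open tX OH /\ (exists x, OH x) /\ (forall x, OH x -> A x) /\
     forall P, open tX P -> (exists x, P x /\ OH x) -> exists z, P z /\ OH z /\ E k z).
  { apply NNPP; intro Hno.
    pose (G k := fun q : {x | Q x} => exists S, (open (subspace tX Q) S /\
                  forall q', S q' -> ~ E k (proj1_sig q')) /\ S q).
    assert (HG : forall k, open (subspace tX Q) (G k) /\ dense (subspace tX Q) (G k)).
    { intro k; split.
      - unfold G. apply (open_union _ (subspace tX Q) (fun S => open (subspace tX Q) S /\
           forall q', S q' -> ~ E k (proj1_sig q'))). intros S [HS _]; exact HS.
      - intros S HS [q0 Sq0]. apply NNPP; intro Hn.
        change (sub_open tX Q S) in HS. destruct HS as [OS [HOS HSiff]].
        assert (Hq' : exists q', S q' /\ E k (proj1_sig q')).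
        { apply NNPP; intro Hz. apply Hn. exists q0; split; auto.
          exists S; split; auto. split.
          - exists OS; split; auto.
          - intros q' Sq' Eq'. apply Hz; eauto. }
        destruct Hq' as [q' [Sq' Eq']].
        apply Hno. exists k, (fun x => OS x /\ A x). split; [apply open_inter; auto|].
        split; [exists (proj1_sig q'); split; [apply HSiff; auto| apply Eq']|].
        split; [intros x [_ Ax]; auto|].
        intros P HP [x [Px OHx]].
        destruct (HQd (fun x => P x /\ (OS x /\ A x))) as [x1 [[Px1 OHx1] Qx1]].
        { apply open_inter; auto. apply open_inter; auto. }
        { exists x; auto. }
        apply NNPP; intro Hz. apply Hn.
        exists (exist _ x1 Qx1). split; [apply HSiff; simpl; apply OHx1|].
        exists (fun q => P (proj1_sig q) /\ OS (proj1_sig q)). split; [split|].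
        + change (sub_open tX Q (fun q => P (proj1_sig q) /\ OS (proj1_sig q))).
          exists (fun x => P x /\ OS x); split; [apply open_inter; auto|tauto].
        + intros q2 [Pq2 Oq2] Eq2. apply Hz. exists (proj1_sig q2).
          split; auto. split; auto. split; auto. apply Eq2.
        + simpl. split; auto. apply OHx1. }
    destruct (HQb G HG (fun q => A (proj1_sig q))) as [q [Aq Gq]].
    - change (sub_open tX Q (fun q => A (proj1_sig q))). exists A; split; auto; tauto.
    - destruct (HQd A HA (ex_intro _ a Aa)) as [x [Ax Qx]].
      exists (exist _ x Qx); simpl; auto.
    - destruct (Hcov (proj1_sig q) (proj2_sig q) Aq) as [k Ek].
      destruct (Gq k) as [S [[_ HS] Sq]]. exact (HS q Sq Ek). }
  destruct Hex as [k [OH [HOH [[p0 OHp0] [OHA Hdens]]]]].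
  destruct (HBs k) as [HOk [[y1 hy1] Hq1]].
  change (sub_open tY N (Bs k)) in HOk. destruct HOk as [On [HOn HOniff]].
  assert (By1 : Bn k y1) by (exists hy1; exact Hq1).
  destruct (Hdens (fun _ => True) (open_full _ tX)) as [z0 [_ [_ Ez0]]].
  { exists p0; auto. }
  assert (HBV : forall y, Bn k y -> V y) by apply Ez0.
  destruct (qc_ball _ _ _ _ (Hqc y1 p0) OH (eps/8) HOH OHp0) as [P [HP [[p1 Pp1] [POH Pd]]]].
  { lra. }
  assert (HBn : forall y, On y -> ON y -> Bn k y).
  { intros y Ony ONy. assert (h : N y) by (apply HONN; auto).
    exists h. apply (HOniff (exist _ y h)). exact Ony. }
  assert (Hkey : forall x y, P x -> Bn k y -> exists z, E k z /\ P z /\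
             Defs.dist m (f (x,y)) (f (z,y)) < eps/8).
  { intros x y Px Hy.
    destruct (qc_ball _ _ _ _ (Hqc y x) P (eps/8) HP Px) as [P1 [HP1 [[w P1w] [P1P P1d]]]].
    { lra. }
    destruct (Hdens P1 HP1) as [z [P1z [_ Ez]]].
    { exists w; split; auto. }
    exists z; split; [exact Ez|]. split; [apply P1P; exact P1z|]. apply (P1d z P1z). }
  exists (fun p => P (fst p) /\ (On (snd p) /\ ON (snd p))).
  split; [|split; [|split]].
  - change (prod_open tX tY (fun p => P (fst p) /\ (On (snd p) /\ ON (snd p)))).
    intros [x y] [Px Hy]. exists P, (fun y => On y /\ ON y).
    split; [exact HP|]. split; [apply open_inter; auto|]. split; [exact Px|]. split; [exact Hy|].
    intros x' y' H1 H2; split; auto.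
  - exists (p1, y1). simpl. split; auto. split.
    + apply (HOniff (exist _ y1 hy1)). exact Hq1.
    + apply (HBV y1 By1).
  - intros [x y] [Px [Ony ONy]]. apply HOUU, HAB.
    + apply OHA, POH, Px.
    + apply (HBV y (HBn y Ony ONy)).
  - intros [x y] [x' y'] [Px [Ony ONy]] [Px' [Ony' ONy']]. simpl in *.
    pose proof (HBn y Ony ONy) as Hy. pose proof (HBn y' Ony' ONy') as Hy'.
    destruct (Hkey x y Px Hy) as [z [Ez [Pz dz]]].
    destruct (Hkey x' y' Px' Hy') as [z' [Ez' [Pz' dz']]].
    pose proof (Pd z Pz) as d1. pose proof (Pd z' Pz') as d2.
    destruct Ez as [_ [_ [_ Ez]]]. destruct Ez' as [_ [_ [_ Ez']]].
    pose proof (Ez y y1 Hy By1) as e2. pose proof (Ez' y1 y' By1 Hy') as e3.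
    pose proof (Defs.dist_tri _ m (f (x,y)) (f (z,y)) (f (x',y'))).
    pose proof (Defs.dist_tri _ m (f (z,y)) (f (z,y1)) (f (x',y'))).
    pose proof (Defs.dist_tri _ m (f (z,y1)) (f (p0,y1)) (f (x',y'))).
    pose proof (Defs.dist_tri _ m (f (p0,y1)) (f (z',y1)) (f (x',y'))).
    pose proof (Defs.dist_tri _ m (f (z',y1)) (f (z',y')) (f (x',y'))).
    rewrite (Defs.dist_sym _ m (f (z,y1)) (f (p0,y1))) in *.
    rewrite (Defs.dist_sym _ m (f (z',y')) (f (x',y'))) in *.
    unfold e1 in *. lra.
Qed.
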